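(* Let $q_{12},q_{13}\in\mathbb{H}$ with $k=|q_{12}|^2+|q_{13}|^2>0$, and let $\tilde A=\begin{pmatrix}0&q_{12}&q_{13}\\0&1&0\\0&0&1\end{pmatrix}$. Then $W(\tilde A)=\bigcup_{d\in[0,1]}\mathbb{D}_{\mathbb{H}}\big(d,\sqrt{kd(1-d)}\big)$, and, identifying $\mathbb{C}=\mathbb{R}+\mathbb{R}i\subset\mathbb{H}$ with $\mathbb{R}^2$ via $x+yi\mapsto(x,y)$, $$W(\tilde A)\cap\mathbb{C}=\bigcup_{d\in[0,1]}\mathbb{D}_{\mathbb{C}}\big(d,\sqrt{kd(1-d)}\big)=\Big\{(x,y)\in\mathbb{R}^2:\ \frac{(x-\frac12)^2}{\frac{k+1}{4}}+\frac{y^2}{\frac{k}{4}}\le1\Big\}.$$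
   Context: $\mathbb{H}$ denotes the real quaternions, $|q|^2=qq^*$. The numerical range of $A\in\mathcal{M}_n(\mathbb{H})$ is $W(A)=\{\mathbf{x}^*A\mathbf{x}:\mathbf{x}\in\mathbb{H}^n,\ \mathbf{x}^*\mathbf{x}=1\}$. $\mathbb{D}_{\mathbb{H}}(c,r)=\{q\in\mathbb{H}:|q-c|\le r\}$ and $\mathbb{D}_{\mathbb{C}}(c,r)=\{z\in\mathbb{C}:|z-c|\le r\}$. *)

(* Defs.v *)
(* Real quaternions over an arbitrary real closed field R
   (the paper's H is the case R = real numbers). *)
From HB Require Import structures.
From mathcomp Require Import all_boot all_order all_algebra.
Set Implicit Arguments. Unset Strict Implicit. Unset Printing Implicit Defensive.
Import Order.TTheory GRing.Theory Num.Theory.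
Local Open Scope ring_scope.

Record quat (R : Type) := Quat { qre : R; qi : R; qj : R; qk : R }.

Section Quat.
Variable R : rcfType.

Definition qzero : quat R := Quat 0 0 0 0.
Definition qone : quat R := Quat 1 0 0 0.
Definition qreal (r : R) : quat R := Quat r 0 0 0.
Definition qadd (p q : quat R) : quat R :=
  Quat (qre p + qre q) (qi p + qi q) (qj p + qj q) (qk p + qk q).
Definition qopp (p : quat R) : quat R := Quat (- qre p) (- qi p) (- qj p) (- qk p).
Definition qsub (p q : quat R) : quat R := qadd p (qopp q).
(* Hamilton product: i^2 = j^2 = k^2 = ijk = -1 *)
Definition qmul (p q : quat R) : quat R :=
  Quat (qre p * qre q - qi p * qi q - qj p * qj q - qk p * qk q)
       (qre p * qi q + qi p * qre q + qj p * qk q - qk p * qj q)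
       (qre p * qj q - qi p * qk q + qj p * qre q + qk p * qi q)
       (qre p * qk q + qi p * qj q - qj p * qi q + qk p * qre q).
Definition qconj (p : quat R) : quat R := Quat (qre p) (- qi p) (- qj p) (- qk p).
Definition qnorm2 (p : quat R) : R :=
  qre p ^+ 2 + qi p ^+ 2 + qj p ^+ 2 + qk p ^+ 2.
Definition qabs (p : quat R) : R := Num.sqrt (qnorm2 p).

Definition numrange (n : nat) (A : 'M[quat R]_n) (q : quat R) : Prop :=
  exists x : 'cV[quat R]_n,
    \big[qadd/qzero]_(i < n) qmul (qconj (x i ord0)) (x i ord0) = qone /\
    q = \big[qadd/qzero]_(i < n) \big[qadd/qzero]_(j < n)
          qmul (qconj (x i ord0)) (qmul (A i j) (x j ord0)).

Definition diskH (c : quat R) (r : R) (q : quat R) : Prop := qabs (qsub q c) <= r.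
(* D_C(c, r) = { z in C : |z - c| <= r }, with z = x + y i as the pair (x, y),
   c = c1 + c2 i *)
Definition diskC (c1 c2 : R) (r : R) (x y : R) : Prop :=
  Num.sqrt ((x - c1) ^+ 2 + (y - c2) ^+ 2) <= r.
Definition qofC (x y : R) : quat R := Quat x y 0 0.

Definition Atilde (q12 q13 : quat R) : 'M[quat R]_3 :=
  \matrix_(i < 3, j < 3)
    if (i == 0%N :> nat) && (j == 1%N :> nat) then q12
    else if (i == 0%N :> nat) && (j == 2%N :> nat) then q13
    else if (i == j) && (i != 0%N :> nat) then qone
    else qzero.
End Quat.

(* Main.v *)
Require Import Defs.
From HB Require Import structures.
From mathcomp Require Import all_boot all_order all_algebra.
From mathcomp Require Import ring lra.
Import Order.TTheory GRing.Theory Num.Theory.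
Local Open Scope ring_scope.

Module Aux.
Set Implicit Arguments. Unset Strict Implicit.

Lemma quatE (R : rcfType) (p q : quat R) :
  qre p = qre q -> qi p = qi q -> qj p = qj q -> qk p = qk q -> p = q.
Proof. by case: p; case: q => /= ? ? ? ? ? ? ? ? -> -> -> ->. Qed.

Definition nice (R : rcfType) (q12 q13 x1 x2 x3 : quat R) : quat R :=
  qadd (qmul (qconj x1) (qadd (qmul q12 x2) (qmul q13 x3)))
       (qreal (qnorm2 x2 + qnorm2 x3)).

Lemma numrange_char (R : rcfType) (q12 q13 q : quat R) :
  numrange (Atilde q12 q13) q <->
  exists x1 x2 x3 : quat R, qnorm2 x1 + qnorm2 x2 + qnorm2 x3 = 1 /\
     q = nice q12 q13 x1 x2 x3.
Proof.
split.
- case=> x [H1 H2].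
  exists (x ord0 ord0), (x (lift ord0 ord0) ord0), (x (lift ord0 (lift ord0 ord0)) ord0).
  rewrite !big_ord_recl !big_ord0 in H1 H2.
  rewrite !mxE /= in H2.
  split.
    move/(f_equal (@qre R)): H1 => /= H1; apply: etrans H1; rewrite /qnorm2; ring.
  rewrite H2; apply: quatE; rewrite /= /qnorm2 /=; ring.
- case=> x1 [x2 [x3 [H1 H2]]].
  exists (\col_(i < 3) nth (qzero R) [:: x1; x2; x3] i).
  rewrite !big_ord_recl !big_ord0 !mxE /=.
  split.
    apply: quatE; rewrite /= -?H1 /qnorm2 /=; ring.
  rewrite H2; apply: quatE; rewrite /= /qnorm2 /=; ring.
Qed.

Definition qdot (R : rcfType) (u w : quat R) : R :=
  qre u * qre w + qi u * qi w + qj u * qj w + qk u * qk w.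

Lemma qnorm2_ge0 (R : rcfType) (p : quat R) : 0 <= qnorm2 p.
Proof. rewrite /qnorm2; nra. Qed.

Lemma qnorm2M (R : rcfType) (p q : quat R) :
  qnorm2 (qmul p q) = qnorm2 p * qnorm2 q.
Proof. rewrite /qnorm2 /=; ring. Qed.

Lemma qnorm2_conj (R : rcfType) (p : quat R) : qnorm2 (qconj p) = qnorm2 p.
Proof. rewrite /qnorm2 /=; ring. Qed.

Lemma qdot_cs (R : rcfType) (u w : quat R) :
  qdot u w ^+ 2 <= qnorm2 u * qnorm2 w.
Proof.
have -> : qnorm2 u * qnorm2 w = qdot u w ^+ 2 +
  ((qre u * qi w - qi u * qre w)^+2 + (qre u * qj w - qj u * qre w)^+2 +
   (qre u * qk w - qk u * qre w)^+2 + (qi u * qj w - qj u * qi w)^+2 +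
   (qi u * qk w - qk u * qi w)^+2 + (qj u * qk w - qk u * qj w)^+2).
  rewrite /qdot /qnorm2; ring.
by rewrite lerDl !addr_ge0 ?sqr_ge0.
Qed.

Lemma qcs (R : rcfType) (a b x y : quat R) :
  qnorm2 (qadd (qmul a x) (qmul b y)) <=
  (qnorm2 a + qnorm2 b) * (qnorm2 x + qnorm2 y).
Proof.
set u := qmul a x; set w := qmul b y.
have -> : qnorm2 (qadd u w) = qnorm2 u + qnorm2 w + 2 * qdot u w.
  rewrite /qnorm2 /qdot /=; ring.
have hcs := qdot_cs u w.
rewrite /u /w !qnorm2M in hcs *.
move: hcs.
have := qnorm2_ge0 a; have := qnorm2_ge0 b; have := qnorm2_ge0 x; have := qnorm2_ge0 y.
set na := qnorm2 a; set nb := qnorm2 b; set nx := qnorm2 x; set ny := qnorm2 y.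
set s := qdot _ _ => hy hx hb ha hcs.
have h1 : (2 * s) ^+ 2 <= (na * ny + nb * nx) ^+ 2.
  have -> : (na * ny + nb * nx) ^+ 2 = (na * ny - nb * nx) ^+ 2 + 4 * (na * nx * (nb * ny)) by ring.
  have : 0 <= (na * ny - nb * nx) ^+ 2 by apply: sqr_ge0.
  have -> : (2 * s) ^+ 2 = 4 * s ^+ 2 by ring.
  lra.
have h2 : 2 * s <= na * ny + nb * nx.
  have : 0 <= na * ny + nb * nx by nra.
  nra.
nra.
Qed.

Lemma root_ex (R : rcfType) (k P N d0 : R) : 0 < k -> P ^+ 2 <= N ->
  0 <= d0 <= 1 -> N - 2 * P * d0 + d0 ^+ 2 <= k * d0 * (1 - d0) ->
  exists d, 0 < d <= 1 /\ N - 2 * P * d + d ^+ 2 = k * d * (1 - d).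
Proof.
move=> hk hPN /andP[hd0 hd1] hf.
set b := 2 * P + k. set c := 2 * (1 + k). set D := b ^+ 2 - 2 * c * N.
have hc : 0 < c by rewrite /c; lra.
have hD : 0 <= D.
  have -> : D = (c * d0 - b) ^+ 2 - 2 * c * ((N - 2 * P * d0 + d0 ^+ 2) - k * d0 * (1 - d0)).
    rewrite /D /b /c; ring.
  have : 0 <= c * (k * d0 * (1 - d0) - (N - 2 * P * d0 + d0 ^+ 2)).
    apply: mulr_ge0; lra.
  have := sqr_ge0 (c * d0 - b).
  have -> : (c * d0 - b) ^+ 2 - 2 * c * ((N - 2 * P * d0 + d0 ^+ 2) - k * d0 * (1 - d0)) =
    (c * d0 - b) ^+ 2 + 2 * (c * (k * d0 * (1 - d0) - (N - 2 * P * d0 + d0 ^+ 2))) by ring.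
  lra.
have hb : 0 < b.
  rewrite /b; rewrite ltNge; apply/negP => hb.
  have h1 : k / 2 + d0 <= d0 - P by lra.
  have h2 : (k / 2 + d0) ^+ 2 <= (d0 - P) ^+ 2.
    have : 0 <= k / 2 + d0 by lra.
    nra.
  have : (d0 - P) ^+ 2 <= N - 2 * P * d0 + d0 ^+ 2 by nra.
  nra.
have hcb : b <= c.
  rewrite /b /c; rewrite leNgt; apply/negP => hb'.
  have h1 : k / 2 + (1 - d0) <= P - d0 by lra.
  have h2 : (k / 2 + (1 - d0)) ^+ 2 <= (P - d0) ^+ 2.
    have : 0 <= k / 2 + (1 - d0) by lra.
    nra.
  have : (P - d0) ^+ 2 <= N - 2 * P * d0 + d0 ^+ 2 by nra.
  have h3 : (k / 2 + (1 - d0)) ^+ 2 - k * d0 * (1 - d0) = k ^+ 2 / 4 + (1 - d0) ^+ 2 * (1 + k).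
    by field.
  have : 0 < k ^+ 2 / 4 by apply: divr_gt0; [apply: exprn_gt0|]; lra.
  have : 0 <= (1 - d0) ^+ 2 * (1 + k) by apply: mulr_ge0; [apply: sqr_ge0|lra].
  lra.
set e := Num.sqrt D.
have he : e ^+ 2 = D by rewrite /e sqr_sqrtr.
have he0 : 0 <= e by rewrite /e sqrtr_ge0.
have hec : e <= c - b.
  have : e ^+ 2 <= (c - b) ^+ 2.
    have -> : (c - b) ^+ 2 = D + 2 * c * (1 - 2 * P + N).
      rewrite /D /b /c; ring.
    have : 0 <= c * (1 - 2 * P + N) by apply: mulr_ge0; [lra| have := sqr_ge0 (1 - P); nra].
    rewrite he; lra.
  have : 0 <= c - b by lra.
  nra.
exists ((b + e) / c).
have hdc : (b + e) / c * c = b + e by rewrite mulfVK // gt_eqF.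
split.
  apply/andP; split; first by apply: divr_gt0; lra.
  by rewrite ler_pdivrMr // mul1r; lra.
set d := (b + e) / c in hdc *.
have H : 2 * c * ((N - 2 * P * d + d ^+ 2) - k * d * (1 - d)) = 0.
  have -> : 2 * c * ((N - 2 * P * d + d ^+ 2) - k * d * (1 - d)) =
       (d * c) ^+ 2 - 2 * b * (d * c) + 2 * c * N.
    rewrite /c /b; ring.
  rewrite hdc.
  have -> : (b + e) ^+ 2 - 2 * b * (b + e) + 2 * c * N = e ^+ 2 - D.
    rewrite /D; ring.
  by rewrite he subrr.
apply/eqP; rewrite -subr_eq0; apply/eqP.
move/eqP: H; rewrite mulf_eq0 => /orP[|/eqP //].
rewrite mulf_eq0 => /orP[|]; first by rewrite pnatr_eq0.
by move/eqP => hc0; move: hc; rewrite hc0 ltxx.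
Qed.

Definition qscale (R : rcfType) (r : R) (p : quat R) : quat R :=
  Quat (r * qre p) (r * qi p) (r * qj p) (r * qk p).

Lemma qnorm2_scale (R : rcfType) r (p : quat R) : qnorm2 (qscale r p) = r ^+ 2 * qnorm2 p.
Proof. rewrite /qnorm2 /=; ring. Qed.

Lemma qn_sub (R : rcfType) (q : quat R) d :
  qnorm2 (qsub q (qreal d)) = qnorm2 q - 2 * qre q * d + d ^+ 2.
Proof. rewrite /qnorm2 /=; ring. Qed.

Lemma construct (R : rcfType) (q12 q13 q : quat R) (k d : R) :
  k = qnorm2 q12 + qnorm2 q13 -> 0 < k -> 0 < d <= 1 ->
  qnorm2 (qsub q (qreal d)) = k * d * (1 - d) ->
  exists x1 x2 x3 : quat R, qnorm2 x1 + qnorm2 x2 + qnorm2 x3 = 1 /\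
     q = nice q12 q13 x1 x2 x3.
Proof.
move=> hk hk0 /andP[hd0 hd1] hN.
set a := Num.sqrt (d / k).
have ha : a ^+ 2 * k = d.
  rewrite /a sqr_sqrtr; last by apply: divr_ge0; lra.
  by rewrite mulfVK // gt_eqF.
have ha0 : 0 < a by rewrite /a sqrtr_gt0; apply: divr_gt0.
set t := (a * k)^-1.
have hta : t * a * k = 1 by rewrite /t -mulrA mulVf // mulf_neq0 // gt_eqF.
exists (qscale t (qconj (qsub q (qreal d)))), (qscale a (qconj q12)), (qscale a (qconj q13)).
split.
  rewrite !qnorm2_scale !qnorm2_conj hN.
  transitivity ((t * a * k) ^+ 2 * (1 - a ^+ 2 * k) + a ^+ 2 * k).
    by rewrite -ha hk; ring.
  by rewrite hta ha; ring.
apply: quatE; rewrite /nice /= /qnorm2 /=.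
- symmetry; transitivity (t * a * k * (qre q - d) + a ^+ 2 * k).
    by rewrite hk /qnorm2; ring.
  by rewrite hta ha; ring.
- symmetry; transitivity (t * a * k * qi q).
    by rewrite hk /qnorm2; ring.
  by rewrite hta; ring.
- symmetry; transitivity (t * a * k * qj q).
    by rewrite hk /qnorm2; ring.
  by rewrite hta; ring.
- symmetry; transitivity (t * a * k * qk q).
    by rewrite hk /qnorm2; ring.
  by rewrite hta; ring.
Qed.

Lemma ball (R : rcfType) (q12 q13 q : quat R) (k : R) :
  k = qnorm2 q12 + qnorm2 q13 -> 0 < k ->
  numrange (Atilde q12 q13) q <->
  exists d, 0 <= d <= 1 /\ qnorm2 (qsub q (qreal d)) <= k * d * (1 - d).
Proof.
move=> hk hk0; rewrite numrange_char; split.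
- case=> x1 [x2 [x3 [H1 H2]]].
  exists (qnorm2 x2 + qnorm2 x3).
  have h1 := qnorm2_ge0 x1; have h2 := qnorm2_ge0 x2; have h3 := qnorm2_ge0 x3.
  split; first by apply/andP; split; lra.
  have -> : qsub q (qreal (qnorm2 x2 + qnorm2 x3)) =
     qmul (qconj x1) (qadd (qmul q12 x2) (qmul q13 x3)).
    rewrite H2; apply: quatE; rewrite /= /qnorm2 /=; ring.
  rewrite qnorm2M qnorm2_conj.
  have hx1 : qnorm2 x1 = 1 - (qnorm2 x2 + qnorm2 x3) by lra.
  rewrite hx1.
  have := qcs q12 q13 x2 x3; rewrite -hk => hv.
  rewrite [k * _ * _]mulrC; apply: ler_wpM2l; lra.
- case=> d0 [hd0 hf].
  have [d [hd hN]] : exists d, 0 < d <= 1 /\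
      qnorm2 q - 2 * qre q * d + d ^+ 2 = k * d * (1 - d).
    apply: (root_ex (d0 := d0)) => //; last by rewrite -qn_sub.
    rewrite /qnorm2; nra.
  apply: (construct hk hk0 hd); by rewrite qn_sub.
Qed.

Lemma ellipse (R : rcfType) (k x y : R) : 0 < k ->
  (exists d : R, 0 <= d <= 1 /\ (x - d) ^+ 2 + y ^+ 2 <= k * d * (1 - d)) <->
  (x - 2^-1) ^+ 2 / ((k + 1) / 4%:R) + y ^+ 2 / (k / 4%:R) <= 1.
Proof.
move=> hk.
have -> : (x - 2^-1) ^+ 2 / ((k + 1) / 4%:R) + y ^+ 2 / (k / 4%:R) =
   (k * (2 * x - 1) ^+ 2 + 4 * (k + 1) * y ^+ 2) / (k * (k + 1)).
  by field; apply/andP; split; rewrite gt_eqF //; lra.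
have hkk : 0 < k * (k + 1) by apply: mulr_gt0; lra.
rewrite ler_pdivrMr // mul1r.
split.
- case=> d [/andP[hd0 hd1] hf].
  have -> : k * (2 * x - 1) ^+ 2 + 4 * (k + 1) * y ^+ 2 =
     k * (k + 1) - ((2 * x + k) ^+ 2 - 4 * (1 + k) * (x ^+ 2 + y ^+ 2)) by ring.
  have -> : (2 * x + k) ^+ 2 - 4 * (1 + k) * (x ^+ 2 + y ^+ 2) =
     (2 * (1 + k) * d - (2 * x + k)) ^+ 2 +
     4 * (1 + k) * (k * d * (1 - d) - ((x - d) ^+ 2 + y ^+ 2)) by ring.
  have := sqr_ge0 (2 * (1 + k) * d - (2 * x + k)).
  have : 0 <= 4 * (1 + k) * (k * d * (1 - d) - ((x - d) ^+ 2 + y ^+ 2)).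
    apply: mulr_ge0; lra.
  lra.
- move=> hE.
  exists ((2 * x + k) / (2 * (1 + k))).
  have hc : 0 < 2 * (1 + k) by lra.
  have hx : (2 * x - 1) ^+ 2 <= (k + 1) ^+ 2.
    have : 0 <= 4 * (k + 1) * y ^+ 2 by apply: mulr_ge0; [lra|apply: sqr_ge0].
    have : (k + 1) <= (k + 1) ^+ 2 by nra.
    nra.
  split.
    apply/andP; split.
      apply: divr_ge0; nra.
    rewrite ler_pdivrMr // mul1r; nra.
  rewrite -subr_le0.
  have -> : (x - (2 * x + k) / (2 * (1 + k))) ^+ 2 + y ^+ 2 -
       k * ((2 * x + k) / (2 * (1 + k))) * (1 - (2 * x + k) / (2 * (1 + k))) =
     - ((2 * x + k) ^+ 2 - 4 * (1 + k) * (x ^+ 2 + y ^+ 2)) / (4 * (1 + k)) .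
    by field; rewrite gt_eqF //; lra.
  rewrite mulNr oppr_le0; apply: divr_ge0; last by lra.
  have -> : (2 * x + k) ^+ 2 - 4 * (1 + k) * (x ^+ 2 + y ^+ 2) =
     k * (k + 1) - (k * (2 * x - 1) ^+ 2 + 4 * (k + 1) * y ^+ 2) by ring.
  lra.
Qed.

End Aux.
Import Aux.

Theorem mainTheorem8 (R : rcfType) (q12 q13 : quat R) :
  let k := qnorm2 q12 + qnorm2 q13 in
  0 < k ->
  (forall q : quat R,
     numrange (Atilde q12 q13) q <->
     exists d : R, 0 <= d <= 1 /\
       diskH (qreal d) (Num.sqrt (k * d * (1 - d))) q) /\
  (forall x y : R,
     (numrange (Atilde q12 q13) (qofC x y) <->
      exists d : R, 0 <= d <= 1 /\
        diskC d 0 (Num.sqrt (k * d * (1 - d))) x y) /\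
     ((exists d : R, 0 <= d <= 1 /\
        diskC d 0 (Num.sqrt (k * d * (1 - d))) x y) <->
      (x - 2^-1) ^+ 2 / ((k + 1) / 4%:R) + y ^+ 2 / (k / 4%:R) <= 1)).
Proof.
move=> k hk0.
have hk : k = qnorm2 q12 + qnorm2 q13 by [].
have hr : forall d : R, 0 <= d <= 1 -> 0 <= k * d * (1 - d).
  move=> d /andP[h0 h1]; apply: mulr_ge0; [apply: mulr_ge0|]; lra.
have part1 : forall q : quat R,
     numrange (Atilde q12 q13) q <->
     exists d : R, 0 <= d <= 1 /\
       diskH (qreal d) (Num.sqrt (k * d * (1 - d))) q.
  move=> q; rewrite (ball q hk hk0); split; case=> d [hd h]; exists d; split=> //.
    by rewrite /diskH /qabs ler_sqrt // hr.
  by move: h; rewrite /diskH /qabs ler_sqrt // hr.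
split=> // x y; split.
  have E : forall d, qnorm2 (qsub (qofC x y) (qreal d)) = (x - d) ^+ 2 + (y - 0) ^+ 2.
    by move=> d; rewrite /qnorm2 /=; ring.
  rewrite part1; split; case=> d [hd h]; exists d; split=> //; move: h;
  by rewrite /diskH /diskC /qabs E.
rewrite -(ellipse x y hk0).
split; case=> d [hd h]; exists d; split=> //; move: h;
  by rewrite /diskC subr0 ler_sqrt // hr.
Qed.
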